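(* Let the iterates be generated by the Fast PL-ADMM-PS algorithm and set $\hat{\boldsymbol{\lambda}}^{k+1}=\boldsymbol{\lambda}^k+\beta(\mathcal{A}(\mathbf{z}^k)-\mathbf{b})$. Then for every $k\ge0$, every $i\in\{1,\dots,n\}$ and every $\mathbf{x}_i$, $$\frac{1-\theta^{(k+1)}}{(\theta^{(k+1)})^2}\bigl(f_i(\mathbf{x}_i^{k+1})-f_i(\mathbf{x}_i)\bigr)-\frac{1}{\theta^{(k)}}\bigl\langle\mathcal{A}_i^T(\hat{\boldsymbol{\lambda}}^{k+1}),\mathbf{x}_i-\mathbf{z}_i^{k+1}\bigr\rangle$$ $$\le\frac{1-\theta^{(k)}}{(\theta^{(k)})^2}\bigl(f_i(\mathbf{x}_i^k)-f_i(\mathbf{x}_i)\bigr)+\frac{L_i}{2}\bigl(\|\mathbf{z}_i^k-\mathbf{x}_i\|^2-\|\mathbf{z}_i^{k+1}-\mathbf{x}_i\|^2\bigr)+\frac{\beta\eta_i}{2\theta^{(k)}}\bigl(\|\mathbf{z}_i^k-\mathbf{x}_i\|^2-\|\mathbf{z}_i^{k+1}-\mathbf{x}_i\|^2-\|\mathbf{z}_i^{k+1}-\mathbf{z}_i^k\|^2\bigr).$$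
   Context: Setting: finite-dimensional real inner product spaces with induced norms $\|\cdot\|$. Problem: $\min\sum_{i=1}^n f_i(\mathbf{x}_i)$, $f_i=g_i+h_i$, subject to $\mathcal{A}(\mathbf{x}):=\sum_{i=1}^n\mathcal{A}_i(\mathbf{x}_i)=\mathbf{b}$, where $\mathbf{x}=(\mathbf{x}_1,\dots,\mathbf{x}_n)$, each $g_i,h_i$ is proper convex lower semicontinuous, $g_i$ is differentiable with $L_i$-Lipschitz gradient ($L_i>0$), each $\mathcal{A}_i$ is a nonzero linear map (adjoint $\mathcal{A}_i^T$, operator norm $\|\mathcal{A}_i\|$) into a common space. Fast PL-ADMM-PS: fix $\beta>0$ and $\eta_i>n\|\mathcal{A}_i\|^2$; given $\mathbf{x}^0,\mathbf{z}^0,\boldsymbol{\lambda}^0$ and $\theta^{(0)}=1$, for $k=0,1,2,\dots$, for each $i=1,\dots,n$ (in parallel): $\mathbf{y}_i^{k+1}=(1-\theta^{(k)})\mathbf{x}_i^k+\theta^{(k)}\mathbf{z}_i^k$; $\mathbf{z}_i^{k+1}=\arg\min_{\mathbf{x}_i}\ \langle\nabla g_i(\mathbf{y}_i^{k+1}),\mathbf{x}_i\rangle+h_i(\mathbf{x}_i)+\langle\boldsymbol{\lambda}^k,\mathcal{A}_i(\mathbf{x}_i)\rangle+\langle\beta\mathcal{A}_i^T(\mathcal{A}(\mathbf{z}^k)-\mathbf{b}),\mathbf{x}_i\rangle+\frac{L_i\theta^{(k)}+\beta\eta_i}{2}\|\mathbf{x}_i-\mathbf{z}_i^k\|^2$;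 $\mathbf{x}_i^{k+1}=(1-\theta^{(k)})\mathbf{x}_i^k+\theta^{(k)}\mathbf{z}_i^{k+1}$; then $\boldsymbol{\lambda}^{k+1}=\boldsymbol{\lambda}^k+\beta(\mathcal{A}(\mathbf{z}^{k+1})-\mathbf{b})$ and $\theta^{(k+1)}=\frac{-(\theta^{(k)})^2+\sqrt{(\theta^{(k)})^4+4(\theta^{(k)})^2}}{2}$. *)

(* Defs.v *)
From mathcomp Require Import ssreflect ssrfun ssrbool eqtype ssrnat seq fintype bigop.
From Stdlib Require Import Reals.
Set Implicit Arguments.
Unset Strict Implicit.
Open Scope R_scope.

(* A finite-dimensional real inner product space is modelled as R^d with the
   standard inner product. *)
Definition vec (d : nat) := 'I_d -> R.
Definition vadd {d} (x y : vec d) : vec d := fun j => x j + y j.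
Definition vsub {d} (x y : vec d) : vec d := fun j => x j - y j.
Definition vscale {d} (c : R) (x : vec d) : vec d := fun j => c * x j.
Definition ip {d} (x y : vec d) : R := \big[Rplus/0]_(j < d) (x j * y j).
Definition norm {d} (x : vec d) : R := sqrt (ip x x).

Definition mat (m d : nat) := 'I_m -> 'I_d -> R.
Definition mapply {m d} (M : mat m d) (x : vec d) : vec m :=
  fun r => \big[Rplus/0]_(j < d) (M r j * x j).
Definition madj {m d} (M : mat m d) (y : vec m) : vec d :=
  fun j => \big[Rplus/0]_(r < m) (M r j * y r).
Definition mat_nonzero {m d} (M : mat m d) : Prop := exists r j, M r j <> 0.
Definition is_opnorm {m d} (M : mat m d) (c : R) : Prop :=
  is_lub (fun t => exists x : vec d, norm x <= 1 /\ t = norm (mapply M x)) c.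

(* Extended reals (-oo,+oo] : None stands for +oo. *)
Definition le_ext (a b : option R) : Prop :=
  match b with
  | None => True
  | Some y => match a with None => False | Some x => x <= y end
  end.
Definition oshift (a : R) (o : option R) : option R := option_map (Rplus a) o.
(* value of a point known to be in the domain (None is mapped to 0; only used
   where the point is in the domain or the coefficient is zero) *)
Definition ev (o : option R) : R := match o with Some v => v | None => 0 end.

Definition proper_fun {d} (f : vec d -> option R) : Prop :=
  exists x v, f x = Some v.
Definition convex_fun {d} (f : vec d -> option R) : Prop :=
  forall (x y : vec d) (a b t : R), f x = Some a -> f y = Some b -> 0 <= t <= 1 ->
    exists c, f (vadd (vscale t x) (vscale (1 - t) y)) = Some c /\
              c <= t * a + (1 - t) * b.
Definition lsc_fun {d} (f : vec d -> option R) : Prop :=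
  forall (x : vec d) (M : R), le_ext (Some M) (f x) -> f x <> Some M ->
    exists delta, 0 < delta /\ forall y, norm (vsub y x) < delta ->
      le_ext (Some M) (f y) /\ f y <> Some M.

Definition is_gradient {d} (f : vec d -> R) (G : vec d -> vec d) : Prop :=
  forall (x : vec d) (eps : R), 0 < eps -> exists delta, 0 < delta /\
    forall hh : vec d, norm hh < delta ->
      Rabs (f (vadd x hh) - f x - ip (G x) hh) <= eps * norm hh.
Definition lipschitz {d} (G : vec d -> vec d) (Lc : R) : Prop :=
  forall x y : vec d, norm (vsub (G x) (G y)) <= Lc * norm (vsub x y).

Definition is_argmin {d} (F : vec d -> option R) (z : vec d) : Prop :=
  exists v, F z = Some v /\ forall u, le_ext (Some v) (F u).

Definition Aall {n m} {d : 'I_n -> nat} (A : forall i, mat m (d i))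
  (x : forall i, vec (d i)) : vec m :=
  fun r => \big[Rplus/0]_(i < n) mapply (A i) (x i) r.

(* Main.v *)
From HB Require Import structures.
Require Import Defs.
From mathcomp Require Import ssreflect ssrfun ssrbool eqtype ssrnat seq fintype bigop.
From Stdlib Require Import Reals Lra FunctionalExtensionality.
Open Scope R_scope.

HB.instance Definition _ := Monoid.isComLaw.Build R 0 Rplus
  (fun a b c => esym (Rplus_assoc a b c)) Rplus_comm Rplus_0_l.

Lemma sum_lin d (F G : 'I_d -> R) a b :
  \big[Rplus/0]_(j < d) (a * F j + b * G j) =
  a * (\big[Rplus/0]_(j < d) F j) + b * (\big[Rplus/0]_(j < d) G j).
Proof.
apply: (big_rec3 (fun s1 s2 s3 => s1 = a * s2 + b * s3)); first ring.
by move=> i y1 y2 y3 _ ->; ring.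
Qed.

Lemma sum_scal d (F : 'I_d -> R) a :
  a * (\big[Rplus/0]_(j < d) F j) = \big[Rplus/0]_(j < d) (a * F j).
Proof.
transitivity (a * (\big[Rplus/0]_(j < d) F j) + 0 * (\big[Rplus/0]_(j < d) F j)); first ring.
rewrite -sum_lin; apply: eq_bigr => j _; ring.
Qed.

Section IP.
Context {d : nat}.
Implicit Types x y z w : vec d.

Lemma ip_sym x y : ip x y = ip y x.
Proof. rewrite /ip; apply: eq_bigr => j _; ring. Qed.

Lemma ip_addl x y z : ip (vadd x y) z = ip x z + ip y z.
Proof.
rewrite /ip.
transitivity (\big[Rplus/0]_(j < d) (1 * (x j * z j) + 1 * (y j * z j))).
  by apply: eq_bigr => j _; rewrite /vadd; ring.
rewrite sum_lin; ring.
Qed.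

Lemma ip_subl x y z : ip (vsub x y) z = ip x z - ip y z.
Proof.
rewrite /ip.
transitivity (\big[Rplus/0]_(j < d) (1 * (x j * z j) + (-1) * (y j * z j))).
  by apply: eq_bigr => j _; rewrite /vsub; ring.
rewrite sum_lin; ring.
Qed.

Lemma ip_scalel c x z : ip (vscale c x) z = c * ip x z.
Proof.
rewrite /ip sum_scal; apply: eq_bigr => j _; rewrite /vscale; ring.
Qed.

Lemma ip_addr x y z : ip z (vadd x y) = ip z x + ip z y.
Proof. by rewrite ip_sym ip_addl (ip_sym x) (ip_sym y). Qed.
Lemma ip_subr x y z : ip z (vsub x y) = ip z x - ip z y.
Proof. by rewrite ip_sym ip_subl (ip_sym x) (ip_sym y). Qed.
Lemma ip_scaler c x z : ip z (vscale c x) = c * ip z x.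
Proof. by rewrite ip_sym ip_scalel (ip_sym x). Qed.

Lemma ip_pos x : 0 <= ip x x.
Proof.
rewrite /ip; apply: (big_ind (fun s => 0 <= s)); first lra.
  move=> a b; lra.
move=> j _; apply: Rle_0_sqr.
Qed.

Lemma norm_sq x : norm x ^ 2 = ip x x.
Proof. rewrite /norm /= Rmult_1_r sqrt_sqrt //; apply: ip_pos. Qed.

Lemma norm_pos x : 0 <= norm x.
Proof. apply: sqrt_pos. Qed.

Lemma norm_scale c x : norm (vscale c x) = Rabs c * norm x.
Proof.
rewrite /norm ip_scalel ip_scaler -Rmult_assoc sqrt_mult_alt.
  by rewrite -sqrt_Rsqr_abs.
apply: Rle_0_sqr.
Qed.

Lemma quad_lem a b c : (forall t, 0 <= a - 2 * t * b + t * t * c) -> 0 <= c ->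
  b * b <= a * c.
Proof.
move=> H Hc.
case: (Rle_lt_or_eq_dec 0 c Hc) => Hc'.
  have := H (b / c).
  have -> : a - 2 * (b / c) * b + b / c * (b / c) * c = (a * c - b * b) / c
    by field; lra.
  move=> H1.
  have : 0 <= (a * c - b * b) / c * c by apply: Rmult_le_pos; lra.
  have -> : (a * c - b * b) / c * c = a * c - b * b by field; lra.
  lra.
subst c.
case: (Req_dec b 0) => Hb.
  subst b; have := H 0; lra.
have := H ((a + 1) / (2 * b)).
have -> : a - 2 * ((a + 1) / (2 * b)) * b + (a + 1) / (2 * b) * ((a + 1) / (2 * b)) * 0
   = -1 by field; lra.
lra.
Qed.

Lemma cauchy_schwarz x y : ip x y <= norm x * norm y.
Proof.
have H : ip x y * ip x y <= ip x x * ip y y.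
  apply: quad_lem; last by apply: ip_pos.
  move=> t.
  have := ip_pos (vsub x (vscale t y)).
  rewrite !ip_subl !ip_subr !ip_scalel !ip_scaler (ip_sym y x); lra.
apply: Rle_trans (Rle_abs _) _.
rewrite /norm -sqrt_mult_alt; last by apply: ip_pos.
rewrite -sqrt_Rsqr_abs; apply: sqrt_le_1_alt; rewrite /Rsqr; lra.
Qed.

End IP.

Lemma adj_ip m d (M : mat m d) (y : vec m) (x : vec d) :
  ip y (mapply M x) = ip (madj M y) x.
Proof.
rewrite /ip /mapply /madj.
transitivity (\big[Rplus/0]_(i < m) \big[Rplus/0]_(j < d) (y i * (M i j * x j))).
  by apply: eq_bigr => i _; rewrite sum_scal.
rewrite exchange_big /=; apply: eq_bigr => j _.
rewrite Rmult_comm sum_scal; apply: eq_bigr => i _; ring.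
Qed.

Lemma div_le_aux D H K : 0 < H -> D <= K * H -> D * / H <= K.
Proof.
move=> HH HD; apply: (Rmult_le_reg_r H) => //.
rewrite Rmult_assoc Rinv_l; lra.
Qed.

Lemma vadd_scale_split d (y v : vec d) t h :
  vadd y (vscale (t + h) v) = vadd (vadd y (vscale t v)) (vscale h v).
Proof. apply: functional_extensionality => j; rewrite /vadd /vscale; ring. Qed.

Lemma dir_deriv d (f : vec d -> R) Gf : is_gradient f Gf -> forall y v t,
  derivable_pt_lim (fun s => f (vadd y (vscale s v))) t
     (ip (Gf (vadd y (vscale t v))) v).
Proof.
move=> Hg y v t eps Heps.
set nv := norm v.
have Hnv : 0 <= nv by apply: norm_pos.
have He' : 0 < eps / (nv + 1) by apply: Rdiv_lt_0_compat; lra.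
have [delta [Hdel Hd]] := Hg (vadd y (vscale t v)) _ He'.
have Hdel' : 0 < delta / (nv + 1) by apply: Rdiv_lt_0_compat; lra.
exists (mkposreal _ Hdel') => h Hh0 Hh /=.
rewrite vadd_scale_split.
have Hah : 0 < Rabs h by apply: Rabs_pos_lt.
have Hnorm : norm (vscale h v) < delta.
  rewrite norm_scale.
  have : Rabs h * (nv + 1) < delta.
    have := Hh; rewrite /= => Hh'.
    apply: (Rmult_lt_reg_r (/ (nv + 1))); first by apply: Rinv_0_lt_compat; lra.
    rewrite Rmult_assoc Rinv_r; lra.
  rewrite -/nv; nra.
have := Hd _ Hnorm.
rewrite norm_scale ip_scaler -/nv.
set D := f _ - f _ - _ => HD.
have -> : (f (vadd (vadd y (vscale t v)) (vscale h v)) - f (vadd y (vscale t v))) / h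
   - ip (Gf (vadd y (vscale t v))) v = D / h.
  rewrite /D; field; lra.
rewrite /Rdiv Rabs_mult Rabs_inv.
apply: Rle_lt_trans (_ : eps / (nv + 1) * nv < eps).
  apply: div_le_aux => //; lra.
apply: (Rmult_lt_reg_r (nv + 1)); first lra.
have -> : eps / (nv + 1) * nv * (nv + 1) = eps * nv by field; lra.
nra.
Qed.

Arguments dir_deriv {d f Gf}.

Lemma deriv_eq f x l l' : l = l' -> derivable_pt_lim f x l -> derivable_pt_lim f x l'.
Proof. by move=> ->. Qed.

Lemma dlin C s : derivable_pt_lim (fun t => t * C) s C.
Proof.
have := derivable_pt_lim_mult id (fct_cte C) s 1 0 (derivable_pt_lim_id s)
   (derivable_pt_lim_const C s).
apply: deriv_eq; rewrite /id /fct_cte; ring.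
Qed.

Lemma dquad C s : derivable_pt_lim (fun t => t * (t * C)) s (2 * s * C).
Proof.
have := derivable_pt_lim_mult id (fun t => t * C) s 1 C (derivable_pt_lim_id s)
   (dlin C s).
apply: deriv_eq; rewrite /id; ring.
Qed.

Lemma vadd_scale0 d (y v : vec d) : vadd y (vscale 0 v) = y.
Proof. apply: functional_extensionality => j; rewrite /vadd /vscale; ring. Qed.
Lemma vadd_scale1 d (y v : vec d) : vadd y (vscale 1 v) = vadd y v.
Proof. apply: functional_extensionality => j; rewrite /vadd /vscale; ring. Qed.

Lemma descent d (f : vec d -> R) Gf Lc : is_gradient f Gf -> lipschitz Gf Lc ->
  0 < Lc -> forall y v, f (vadd y v) <= f y + ip (Gf y) v + Lc / 2 * ip v v.
Proof.
move=> Hg HL HLc y v.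
set C1 := ip (Gf y) v. set C2 := Lc / 2 * ip v v.
pose phi := fun s => f (vadd y (vscale s v)) - s * C1 - s * (s * C2).
have Hd : forall s, derivable_pt_lim phi s
    (ip (Gf (vadd y (vscale s v))) v - C1 - 2 * s * C2).
  move=> s.
  have H := derivable_pt_lim_minus _ _ _ _ _
           (derivable_pt_lim_minus _ _ _ _ _ (dir_deriv Hg y v s) (dlin C1 s))
           (dquad C2 s).
  exact H.
pose pr := fun s => exist _ _ (Hd s) : derivable_pt phi s.
have [c [Hc1 Hc2]] := MVT_cor1 phi 0 1 pr Rlt_0_1.
rewrite /derive_pt /pr /= in Hc1.
have Hneg : ip (Gf (vadd y (vscale c v))) v - C1 - 2 * c * C2 <= 0.
  rewrite /C1 -ip_subl.
  have CS := cauchy_schwarz (vsub (Gf (vadd y (vscale c v))) (Gf y)) v.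
  have := HL (vadd y (vscale c v)) y.
  have -> : vsub (vadd y (vscale c v)) y = vscale c v.
    apply: functional_extensionality => j; rewrite /vadd /vsub /vscale; ring.
  rewrite norm_scale Rabs_right; last lra.
  move=> H.
  have Hn := norm_pos (vsub (Gf (vadd y (vscale c v))) (Gf y)).
  have Hv := norm_pos v.
  have -> : 2 * c * C2 = Lc * c * (norm v * norm v).
    rewrite /C2 -(norm_sq v) /=; field.
  have : norm (vsub (Gf (vadd y (vscale c v))) (Gf y)) * norm v
     <= Lc * (c * norm v) * norm v by apply: Rmult_le_compat_r.
  lra.
have : phi 1 <= phi 0 by lra.
rewrite /phi vadd_scale0 vadd_scale1; lra.
Qed.

Lemma convex_grad d (f : vec d -> R) Gf : is_gradient f Gf ->
  convex_fun (fun v => Some (f v)) -> forall y w, f y + ip (Gf y) (vsub w y) <= f w.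
Proof.
move=> Hg Hc y w.
set v := vsub w y.
have Hd := dir_deriv Hg y v 0.
rewrite vadd_scale0 in Hd.
have Hseg : forall t, 0 < t <= 1 -> f (vadd y (vscale t v)) <= (1 - t) * f y + t * f w.
  move=> t Ht.
  have [c [Hc1 Hc2]] := Hc w y (f w) (f y) t erefl erefl (conj (Rlt_le _ _ (proj1 Ht)) (proj2 Ht)).
  have -> : vadd y (vscale t v) = vadd (vscale t w) (vscale (1 - t) y).
    apply: functional_extensionality => j; rewrite /vadd /vscale /v /vsub; ring.
  case: Hc1 => ->; lra.
apply: Rnot_lt_le => Hlt.
set e := ip (Gf y) v - (f w - f y).
have He : 0 < e by rewrite /e; lra.
have [delta Hdel] := Hd e He.
set h := Rmin 1 (delta / 2).
have Hdp := cond_pos delta.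
have Hh : 0 < h by apply: Rmin_pos; lra.
have Hh1 : h <= 1 by apply: Rmin_l.
have Hh2 : h <= delta / 2 by apply: Rmin_r.
have Habs : Rabs h < delta by rewrite Rabs_right; lra.
have := Hdel h (Rgt_not_eq _ _ Hh) Habs.
rewrite Rplus_0_l vadd_scale0.
have Hs := Hseg h (conj Hh Hh1).
move=> H.
have H2 := Rle_lt_trans _ _ _ (Rle_abs _) (eq_ind _ (fun r => r < e) H _ (esym (Rabs_Ropp _))).
have : (f (vadd y (vscale h v)) - f y) / h <= f w - f y.
  apply: div_le_aux => //.
  have -> : (f w - f y) * h = (1 - h) * f y + h * f w - f y by ring.
  lra.
rewrite /e in H2; lra.
Qed.

Lemma lim0 E M : (forall t, 0 < t <= 1 -> 0 <= E + t * M) -> 0 <= E.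
Proof.
move=> H; apply: Rnot_lt_le => HE.
have H1 := H 1 ltac:(lra).
have HM : 0 < M by lra.
have := H (- E / (2 * M)).
have -> : E + - E / (2 * M) * M = E / 2 by field; lra.
have : 0 < - E / (2 * M) by apply: Rdiv_lt_0_compat; lra.
have : - E / (2 * M) <= 1.
  apply: (Rmult_le_reg_r (2 * M)); first lra.
  have -> : - E / (2 * M) * (2 * M) = - E by field; lra.
  lra.
move=> Ha Hb Hc; have := Hc (conj Hb Ha); lra.
Qed.

Lemma three_point d (hf : vec d -> option R) (Q z u z' : vec d) (K : R) hu :
  convex_fun hf ->
  is_argmin (fun w => oshift (ip Q w + K * norm (vsub w z) ^ 2) (hf w)) z' ->
  hf u = Some hu ->
  exists hz', hf z' = Some hz' /\
   hz' + ip Q z' + K * ip (vsub z' z) (vsub z' z) + K * ip (vsub z' u) (vsub z' u)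
     <= hu + ip Q u + K * ip (vsub u z) (vsub u z).
Proof.
move=> Hc [v [Hv Hmin]] Hu.
rewrite norm_sq in Hv.
case Eh: (hf z') Hv => [hz'|] //= [Hv].
exists hz'; split => //.
set E := hu - hz' + ip Q u - ip Q z' + 2 * K * ip (vsub z' z) (vsub u z').
set M := K * ip (vsub u z') (vsub u z').
suff HE : 0 <= E.
  move: HE; rewrite /E !ip_subl !ip_subr (ip_sym z' u) (ip_sym z u) (ip_sym z z'); lra.
apply: (@lim0 E M) => t Ht.
have [ct [Hct Hle]] := Hc u z' hu hz' t Hu Eh (conj (Rlt_le _ _ (proj1 Ht)) (proj2 Ht)).
have := Hmin (vadd (vscale t u) (vscale (1 - t) z')).
rewrite Hct norm_sq /= => Hm.
suff : 0 <= t * (E + t * M).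
  move=> H; apply: (Rmult_le_reg_l t); lra.
move: Hm Hle; rewrite -Hv /E /M.
rewrite !ip_subl !ip_subr !ip_addl !ip_addr !ip_scalel !ip_scaler
  (ip_sym z' u) (ip_sym z u) (ip_sym z z').
lra.
Qed.

Lemma key_comb d (G M x z z' u : vec d) (gx gxp gy gu hx hxp hz hu Li t K be : R) :
  0 <= t <= 1 ->
  K = (Li * t + be) / 2 ->
  gxp <= gy + ip G (vscale t (vsub z' z))
         + Li / 2 * ip (vscale t (vsub z' z)) (vscale t (vsub z' z)) ->
  gy + ip G (vsub x (vadd (vscale (1 - t) x) (vscale t z))) <= gx ->
  gy + ip G (vsub u (vadd (vscale (1 - t) x) (vscale t z))) <= gu ->
  hxp <= (1 - t) * hx + t * hz ->
  hz + ip (vadd G M) z' + K * ip (vsub z' z) (vsub z' z)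
     + K * ip (vsub z' u) (vsub z' u)
   <= hu + ip (vadd G M) u + K * ip (vsub u z) (vsub u z) ->
  gxp + hxp - (gu + hu) - t * ip M (vsub u z')
  <= (1 - t) * (gx + hx - (gu + hu))
     + t ^ 2 / 2 * Li * (norm (vsub z u) ^ 2 - norm (vsub z' u) ^ 2)
     + t / 2 * be * (norm (vsub z u) ^ 2 - norm (vsub z' u) ^ 2
                      - norm (vsub z' z) ^ 2).
Proof.
move=> Ht HK HD HC1 HC2 HH HT.
have HC1' := Rmult_le_compat_l (1 - t) _ _ ltac:(lra) HC1.
have HC2' := Rmult_le_compat_l t _ _ ltac:(lra) HC2.
have HT' := Rmult_le_compat_l t _ _ ltac:(lra) HT.
rewrite HK in HT'.
rewrite !norm_sq.
move: HD HC1' HC2' HT' HH.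
rewrite !ip_subl !ip_subr !ip_addl !ip_addr !ip_scalel !ip_scaler !ip_subl !ip_subr.
rewrite ?(ip_sym z z') ?(ip_sym z u) ?(ip_sym z' u).
lra.
Qed.

Lemma final_div t t' P B C Li n12 be n123 : 0 < t -> 0 < t' < 1 ->
  t' ^ 2 = t ^ 2 * (1 - t') ->
  P - t * B <= (1 - t) * C + t ^ 2 / 2 * Li * n12 + t / 2 * be * n123 ->
  (1 - t') / t' ^ 2 * P - 1 / t * B
   <= (1 - t) / t ^ 2 * C + Li / 2 * n12 + be / (2 * t) * n123.
Proof.
move=> Ht Ht' Heq H.
have -> : (1 - t') / t' ^ 2 = 1 / t ^ 2.
  rewrite Heq; field; split; lra.
have -> : 1 / t ^ 2 * P - 1 / t * B = (P - t * B) * / t ^ 2 by field; lra.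
have -> : (1 - t) / t ^ 2 * C + Li / 2 * n12 + be / (2 * t) * n123
  = ((1 - t) * C + t ^ 2 / 2 * Li * n12 + t / 2 * be * n123) * / t ^ 2
  by field; lra.
apply: Rmult_le_compat_r => //.
apply: Rlt_le; apply: Rinv_0_lt_compat; apply: pow_lt; lra.
Qed.

Lemma theta_step a : 0 < a <= 1 ->
  let t := (- a ^ 2 + sqrt (a ^ 4 + 4 * a ^ 2)) / 2 in
  0 < t < 1 /\ t ^ 2 = a ^ 2 * (1 - t).
Proof.
move=> Ha t; rewrite /t; clear t.
have Hpos : 0 <= a ^ 4 + 4 * a ^ 2 by nra.
have Hs := sqrt_sqrt _ Hpos.
have Hs0 := sqrt_pos (a ^ 4 + 4 * a ^ 2).
set s := sqrt _ in Hs Hs0 *.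
have H1 : a ^ 2 < s.
  apply: Rnot_le_lt => Hle.
  have : s * s <= a ^ 2 * a ^ 2 by apply: Rmult_le_compat; lra.
  have : 0 < a ^ 2 by nra.
  nra.
have H2 : s < a ^ 2 + 2.
  apply: Rnot_le_lt => Hle.
  have : (a ^ 2 + 2) * (a ^ 2 + 2) <= s * s by apply: Rmult_le_compat; nra.
  nra.
split; first lra.
nra.
Qed.

Lemma argmin_dom d (F : vec d -> R) (hf : vec d -> option R) z :
  is_argmin (fun w => oshift (F w) (hf w)) z -> exists v, hf z = Some v.
Proof. by move=> [v [Hv _]]; move: Hv; case: (hf z) => [a|] //= _; exists a. Qed.

Theorem proposition3 (n m : nat) (d : 'I_n -> nat)
  (g : forall i, vec (d i) -> R) (gradg : forall i, vec (d i) -> vec (d i))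
  (h : forall i, vec (d i) -> option R)
  (L : 'I_n -> R) (A : forall i, mat m (d i)) (b : vec m)
  (beta : R) (eta : 'I_n -> R)
  (xs zs : nat -> forall i, vec (d i)) (lam : nat -> vec m) (theta : nat -> R) :
  (forall i, 0 < L i) ->
  (forall i, proper_fun (fun v => Some (g i v)) /\
             convex_fun (fun v => Some (g i v)) /\ lsc_fun (fun v => Some (g i v))) ->
  (forall i, is_gradient (g i) (gradg i)) ->
  (forall i, lipschitz (gradg i) (L i)) ->
  (forall i, proper_fun (h i) /\ convex_fun (h i) /\ lsc_fun (h i)) ->
  (forall i, mat_nonzero (A i)) ->
  0 < beta ->
  (forall i, exists c, is_opnorm (A i) c /\ INR n * c ^ 2 < eta i) ->
  theta 0%nat = 1 ->
  (forall k, theta (S k) =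
     (- theta k ^ 2 + sqrt (theta k ^ 4 + 4 * theta k ^ 2)) / 2) ->
  (forall k i,
     let y := vadd (vscale (1 - theta k) (xs k i)) (vscale (theta k) (zs k i)) in
     is_argmin (fun u : vec (d i) =>
        oshift (ip (gradg i y) u + ip (lam k) (mapply (A i) u)
                + ip (vscale beta (madj (A i) (vsub (Aall A (zs k)) b))) u
                + (L i * theta k + beta * eta i) / 2 * norm (vsub u (zs k i)) ^ 2)
               (h i u))
       (zs (S k) i)) ->
  (forall k i, xs (S k) i =
     vadd (vscale (1 - theta k) (xs k i)) (vscale (theta k) (zs (S k) i))) ->
  (forall k, lam (S k) = vadd (lam k) (vscale beta (vsub (Aall A (zs (S k))) b))) ->
  forall (k : nat) (i : 'I_n) (u : vec (d i)) (hu : R), h i u = Some hu ->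
  let lamhat := vadd (lam k) (vscale beta (vsub (Aall A (zs k)) b)) in
  let fu := g i u + hu in
  (1 - theta (S k)) / theta (S k) ^ 2
      * (g i (xs (S k) i) + ev (h i (xs (S k) i)) - fu)
    - 1 / theta k * ip (madj (A i) lamhat) (vsub u (zs (S k) i))
  <= (1 - theta k) / theta k ^ 2 * (g i (xs k i) + ev (h i (xs k i)) - fu)
     + L i / 2 * (norm (vsub (zs k i) u) ^ 2 - norm (vsub (zs (S k) i) u) ^ 2)
     + beta * eta i / (2 * theta k)
       * (norm (vsub (zs k i) u) ^ 2 - norm (vsub (zs (S k) i) u) ^ 2
          - norm (vsub (zs (S k) i) (zs k i)) ^ 2).
Proof.
move=> HL Hg Hgrad Hlip Hh Hnz Hbeta Heta Ht0 Htrec Hopt Hx Hlam k i u hu Hu lamhat fu.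
have Hpos : forall k, 0 < theta k <= 1.
  elim => [|k' IH]; first by rewrite Ht0; lra.
  rewrite Htrec; have := theta_step (theta k') IH; cbv zeta => -[[A1 A2] _]; lra.
have [_ [Hhc _]] := Hh i.
have [_ [Hgc _]] := Hg i.
have Hdom : forall k, exists v, h i (xs (S k) i) = Some v.
  elim => [|k' [hx Ex]].
    rewrite Hx Ht0.
    have -> : vadd (vscale (1 - 1) (xs 0%nat i)) (vscale 1 (zs 1%nat i)) = zs 1%nat i.
      by apply: functional_extensionality => j; rewrite /vadd /vscale; ring.
    have := Hopt 0%nat i; cbv zeta; apply: argmin_dom.
  have := Hopt (S k') i; cbv zeta => /argmin_dom [hz Ez].
  have [p1 p2] := Hpos (S k').
  have q1 : 0 <= 1 - theta (S k') by lra.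
  have q2 : 1 - theta (S k') <= 1 by lra.
  have [c [Hc1 _]] := Hhc _ _ _ _ (1 - theta (S k')) Ex Ez (conj q1 q2).
  rewrite (_ : 1 - (1 - theta (S k')) = theta (S k')) in Hc1; last by ring.
  by exists c; rewrite Hx.
have Hhstep : forall k hz, h i (zs (S k) i) = Some hz ->
    ev (h i (xs (S k) i)) <= (1 - theta k) * ev (h i (xs k i)) + theta k * hz.
  case => [|k'] hz Ez.
    rewrite Hx Ht0.
    have -> : vadd (vscale (1 - 1) (xs 0%nat i)) (vscale 1 (zs 1%nat i)) = zs 1%nat i.
      by apply: functional_extensionality => j; rewrite /vadd /vscale; ring.
    rewrite Ez /=; lra.
  have [hx Ex] := Hdom k'.
  have [p1 p2] := Hpos (S k').
  have q1 : 0 <= 1 - theta (S k') by lra.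
  have q2 : 1 - theta (S k') <= 1 by lra.
  have [c [Hc1 Hc2]] := Hhc _ _ _ _ (1 - theta (S k')) Ex Ez (conj q1 q2).
  rewrite (_ : 1 - (1 - theta (S k')) = theta (S k')) in Hc1 Hc2; last by ring.
  rewrite Hx Hc1 Ex /=; lra.
have [Ht1 Ht2] := Hpos k.
have := theta_step (theta k) (Hpos k); cbv zeta; rewrite -Htrec => -[Ht' Heq].

refine (@final_div _ _ _ _ _ _ _ _ _ Ht1 Ht' Heq _).
unfold fu.
set y := vadd (vscale (1 - theta k) (xs k i)) (vscale (theta k) (zs k i)).
have Ho := Hopt k i; cbv zeta in Ho.
have E : (fun w => oshift (ip (gradg i y) w + ip (lam k) (mapply (A i) w)
     + ip (vscale beta (madj (A i) (vsub (Aall A (zs k)) b))) w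
     + (L i * theta k + beta * eta i) / 2 * norm (vsub w (zs k i)) ^ 2) (h i w))
  = (fun w => oshift (ip (vadd (gradg i y) (madj (A i) lamhat)) w
     + (L i * theta k + beta * eta i) / 2 * norm (vsub w (zs k i)) ^ 2) (h i w)).
  apply: functional_extensionality => w.
  rewrite /lamhat ip_addl -adj_ip ip_addl ip_scalel ip_scalel -adj_ip.
  congr (oshift _ _); ring.
have Ho' := eq_ind _ (fun F => is_argmin F (zs (S k) i)) Ho _ E.
have [hz [Ez TP]] := @three_point _ (h i) _ (zs k i) u (zs (S k) i) _ hu Hhc Ho' Hu.
have HD : g i (xs (S k) i) <= g i y + ip (gradg i y) (vscale (theta k) (vsub (zs (S k) i) (zs k i)))
    + L i / 2 * ip (vscale (theta k) (vsub (zs (S k) i) (zs k i)))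
                  (vscale (theta k) (vsub (zs (S k) i) (zs k i))).
  rewrite Hx.
  have -> : vadd (vscale (1 - theta k) (xs k i)) (vscale (theta k) (zs (S k) i))
     = vadd y (vscale (theta k) (vsub (zs (S k) i) (zs k i))).
    by apply: functional_extensionality => j; rewrite /y /vadd /vscale /vsub; ring.
  exact: descent _ _ _ _ (Hgrad i) (Hlip i) (HL i) _ _.
have HC1 := convex_grad _ _ _ (Hgrad i) Hgc y (xs k i).
have HC2 := convex_grad _ _ _ (Hgrad i) Hgc y u.
have HH := Hhstep k hz Ez.
exact: (@key_comb _ _ _ _ _ _ _ _ _ _ _ _ _ _ _ _ _ _ _ (conj (Rlt_le _ _ Ht1) Ht2) erefl HD HC1 HC2 HH TP).
Qed.
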